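(* No rank $16$ rootless integral lattice $Q$ with $\mathcal{D}(Q)\cong5^4$ is isometric to a sublattice of $HS_{16}$.
   Context: All lattices are positive definite; rootless means no vectors of norm $2$; $\mathcal{D}(L)=L^*/L$. $HS_{16}$ denotes the rank $16$ even unimodular lattice not isometric to $E_8\perp E_8$ (the lattice $D_{16}^+$, whose root sublattice is $D_{16}$). *)

(* Defs.v *)
(* Lattices are encoded by integer Gram matrices; vectors are
   row vectors over rat (coordinates w.r.t. the chosen basis). *)
From HB Require Import structures.
From mathcomp Require Import all_boot all_order all_algebra.
Set Implicit Arguments. Unset Strict Implicit. Unset Printing Implicit Defensive.
Import Order.TTheory GRing.Theory Num.Theory.
Local Open Scope ring_scope.

Definition is_intq (q : rat) : Prop := exists z : int, q = z%:~R.

Definition intvec (n : nat) (x : 'rV[rat]_n) : Prop := forall i, is_intq (x 0 i).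

Definition gramQ (n : nat) (G : 'M[int]_n) : 'M[rat]_n := map_mx (fun z : int => z%:~R) G.

Definition bform (n : nat) (G : 'M[int]_n) (x y : 'rV[rat]_n) : rat :=
  (x *m gramQ G *m y^T) 0 0.

Definition pos_def_integral_gram (n : nat) (G : 'M[int]_n) : Prop :=
  G^T = G /\ forall x : 'rV[rat]_n, x != 0 -> 0 < bform G x x.

Definition rootless (n : nat) (G : 'M[int]_n) : Prop :=
  ~ exists x : 'rV[rat]_n, intvec x /\ bform G x x = 2.

Definition in_dual (n : nat) (G : 'M[int]_n) (x : 'rV[rat]_n) : Prop :=
  forall y : 'rV[rat]_n, intvec y -> is_intq (bform G x y).

(* D(L) = L^*/L is isomorphic to the abelian group A : there is a surjective
   group homomorphism L^* -> A whose kernel is exactly L (first isomorphism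
   theorem). *)
Definition disc_group_iso (n : nat) (G : 'M[int]_n) (A : zmodType) : Prop :=
  exists f : 'rV[rat]_n -> A,
    [/\ forall x y, in_dual G x -> in_dual G y -> f (x + y) = f x + f y,
        forall a : A, exists2 x, in_dual G x & f x = a
      & forall x, in_dual G x -> (f x = 0 <-> intvec x)].

(* HS_16 = D_16^+ = D_16 u (D_16 + (1/2,...,1/2)) inside Q^16 with the
   standard inner product. *)
Definition in_D (n : nat) (x : 'rV[rat]_n) : Prop :=
  intvec x /\ exists z : int, \sum_i x 0 i = 2 * z%:~R.

Definition halfvec (n : nat) : 'rV[rat]_n := const_mx (1 / 2).

Definition in_HS16 (x : 'rV[rat]_16) : Prop :=
  in_D x \/ in_D (x - halfvec 16).

(* the lattice with Gram matrix G is isometric to a sublattice of HS_16: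
   there are vectors b_1..b_16 of HS_16 (rows of B) whose Gram matrix
   (standard inner product) is G; the sublattice is Z b_1 + ... + Z b_16. *)
Definition iso_to_sublattice_HS16 (G : 'M[int]_16) : Prop :=
  exists B : 'M[rat]_16,
    (forall i, in_HS16 (row i B)) /\ B *m B^T = gramQ G.

(* Main.v *)
Require Import Defs.
From HB Require Import structures.
From mathcomp Require Import all_boot all_order all_algebra all_fingroup all_solvable all_field all_character.
From mathcomp Require Import zify ring lra.
Set Implicit Arguments. Unset Strict Implicit. Unset Printing Implicit Defensive.
Import Order.TTheory GRing.Theory Num.Theory.
Local Open Scope ring_scope.

Lemma intq_int (z : int) : is_intq z%:~R. Proof. by exists z. Qed.
Lemma intq0 : is_intq 0. Proof. by exists 0. Qed.
Lemma intqD a b : is_intq a -> is_intq b -> is_intq (a + b).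
Proof. by move=> [x ->] [y ->]; exists (x + y); rewrite rmorphD. Qed.
Lemma intqN a : is_intq a -> is_intq (- a).
Proof. by move=> [x ->]; exists (- x); rewrite rmorphN. Qed.
Lemma intqM a b : is_intq a -> is_intq b -> is_intq (a * b).
Proof. by move=> [x ->] [y ->]; exists (x * y); rewrite rmorphM. Qed.
Lemma intq_nat n : is_intq n%:R. Proof. by exists n; rewrite pmulrn. Qed.
Lemma intq_sum (I : finType) (F : I -> rat) :
  (forall i, is_intq (F i)) -> is_intq (\sum_i F i).
Proof. move=> H; apply: big_ind => //; [exact: intq0 | exact: intqD]. Qed.

Lemma intvecD n (x y : 'rV[rat]_n) : intvec x -> intvec y -> intvec (x + y).
Proof. by move=> hx hy i; rewrite mxE; apply: intqD. Qed.
Lemma intvecN n (x : 'rV[rat]_n) : intvec x -> intvec (- x).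
Proof. by move=> hx i; rewrite mxE; apply: intqN. Qed.

Lemma sum_rowD n (x y : 'rV[rat]_n) : \sum_i (x + y) 0 i = \sum_i x 0 i + \sum_i y 0 i.
Proof. by rewrite -big_split; apply: eq_bigr => i _; rewrite mxE. Qed.
Lemma sum_rowN n (x : 'rV[rat]_n) : \sum_i (- x) 0 i = - \sum_i x 0 i.
Proof. by rewrite -sumrN; apply: eq_bigr => i _; rewrite mxE. Qed.

Lemma inD0 n : in_D (0 : 'rV[rat]_n).
Proof. split; first by move=> i; rewrite mxE; exact: intq0.
by exists 0; rewrite big1 ?mulr0 // => i _; rewrite mxE. Qed.
Lemma inDD n (x y : 'rV[rat]_n) : in_D x -> in_D y -> in_D (x + y).
Proof.
move=> [hx [a ha]] [hy [b hb]]; split; first exact: intvecD.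
by exists (a + b); rewrite sum_rowD ha hb rmorphD mulrDr.
Qed.
Lemma inDN n (x : 'rV[rat]_n) : in_D x -> in_D (- x).
Proof.
move=> [hx [a ha]]; split; first exact: intvecN.
by exists (- a); rewrite sum_rowN ha rmorphN mulrN.
Qed.
Lemma half2 : (1 / 2 : rat) *+ 2 = 1. Proof. by apply/eqP. Qed.
Lemma inD_one : in_D (halfvec 16 *+ 2).
Proof.
split; first by move=> i; rewrite mulmxnE mxE half2; exists 1.
exists 8; rewrite (eq_bigr (fun _ => 1)); last by move=> i _; rewrite mulmxnE mxE half2.
by rewrite sumr_const card_ord.
Qed.

Lemma inHS0 : in_HS16 0. Proof. by left; exact: inD0. Qed.
Lemma inHSD x y : in_HS16 x -> in_HS16 y -> in_HS16 (x + y).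
Proof.
have e1 a b : a + b - halfvec 16 = a + (b - halfvec 16) by rewrite addrA.
move=> [hx|hx] [hy|hy].
- by left; apply: inDD.
- by right; rewrite e1; apply: inDD.
- by right; rewrite (addrC x) e1; apply: inDD.
left; have -> : x + y = (x - halfvec 16) + (y - halfvec 16) + halfvec 16 *+ 2.
  by rewrite mulr2n addrACA !subrK.
by apply: inDD; [apply: inDD|exact: inD_one].
Qed.
Lemma inHSN x : in_HS16 x -> in_HS16 (- x).
Proof.
move=> [hx|hx]; first by left; apply: inDN.
right; have -> : - x - halfvec 16 = - (x - halfvec 16) + - (halfvec 16 *+ 2).
  by rewrite mulr2n opprB opprD addrA addrAC subrr add0r.
by apply: inDD; apply: inDN => //; exact: inD_one.
Qed.
Lemma inHSMn x n : in_HS16 x -> in_HS16 (x *+ n).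
Proof. move=> h; elim: n => [|n IH]; first by rewrite mulr0n; exact: inHS0.
by rewrite mulrS; apply: inHSD. Qed.
Lemma inHSZ x (z : int) : in_HS16 x -> in_HS16 (z%:~R *: x).
Proof.
move=> h; case: z => n.
  by rewrite -pmulrn scaler_nat; apply: inHSMn.
by rewrite NegzE rmorphN /= -pmulrn scaleNr scaler_nat; apply: inHSN; apply: inHSMn.
Qed.
Lemma inHS_comb (B : 'M[rat]_16) (y : 'rV[rat]_16) :
  (forall i, in_HS16 (row i B)) -> intvec y -> in_HS16 (y *m B).
Proof.
move=> hB hy; rewrite mulmx_sum_row; apply: big_ind; [exact: inHS0|exact: inHSD|].
by move=> i _; case: (hy i) => z ->; apply: inHSZ.
Qed.

Lemma dot_sum n (x y : 'rV[rat]_n) : (x *m y^T) 0 0 = \sum_k x 0 k * y 0 k.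
Proof. by rewrite mxE; apply: eq_bigr => k _; rewrite mxE. Qed.

Lemma dot_D_HS (d w : 'rV[rat]_16) : in_D d -> in_HS16 w -> is_intq ((d *m w^T) 0 0).
Proof.
move=> [hd [a ha]] [[hw _]|[hw _]].
  by rewrite dot_sum; apply: intq_sum => k; apply: intqM.
have -> : w = (w - halfvec 16) + halfvec 16 by rewrite subrK.
rewrite linearD /= mulmxDr mxE; apply: intqD.
  by rewrite dot_sum; apply: intq_sum => k; apply: intqM; [apply: hd| have := hw k; rewrite mxE].
rewrite dot_sum (eq_bigr (fun k => d 0 k / 2)); last by move=> k _; rewrite mxE mul1r.
by rewrite -mulr_suml ha mulrAC divff ?mul1r //; exact: intq_int.
Qed.

Lemma bform_B n (G : 'M[int]_n) (B : 'M[rat]_n) x y :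
  B *m B^T = gramQ G -> bform G x y = ((x *m B) *m (y *m B)^T) 0 0.
Proof. by move=> hB; rewrite /bform -hB trmx_mul !mulmxA. Qed.
Lemma bformDl n (G : 'M[int]_n) x y z : bform G (x + y) z = bform G x z + bform G y z.
Proof. by rewrite /bform !mulmxDl mxE. Qed.
Lemma bformDr n (G : 'M[int]_n) x y z : bform G z (x + y) = bform G z x + bform G z y.
Proof. by rewrite /bform linearD /= mulmxDr mxE. Qed.
Lemma bform0l n (G : 'M[int]_n) y : bform G 0 y = 0.
Proof. by rewrite /bform !mul0mx mxE. Qed.
Lemma bform0r n (G : 'M[int]_n) y : bform G y 0 = 0.
Proof. by rewrite /bform trmx0 mulmx0 mxE. Qed.
Lemma bformNl n (G : 'M[int]_n) x y : bform G (- x) y = - bform G x y.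
Proof. by apply/eqP; rewrite -addr_eq0 -bformDl addNr bform0l. Qed.
Lemma bformNr n (G : 'M[int]_n) x y : bform G y (- x) = - bform G y x.
Proof. by apply/eqP; rewrite -addr_eq0 -bformDr addNr bform0r. Qed.
Lemma bformMnl n (G : 'M[int]_n) x y m : bform G (x *+ m) y = bform G x y *+ m.
Proof. by elim: m => [|m IH]; rewrite ?mulr0n ?bform0l // !mulrS bformDl IH. Qed.
Lemma bformMnr n (G : 'M[int]_n) x y m : bform G y (x *+ m) = bform G y x *+ m.
Proof. by elim: m => [|m IH]; rewrite ?mulr0n ?bform0r // !mulrS bformDr IH. Qed.
Lemma bform_suml n (G : 'M[int]_n) (I : finType) (F : I -> 'rV[rat]_n) y :
  bform G (\sum_i F i) y = \sum_i bform G (F i) y.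
Proof. exact: (big_morph (fun x => bform G x y) (fun a b => bformDl G a b y) (bform0l G y)). Qed.
Lemma bform_sumr n (G : 'M[int]_n) (I : finType) (F : I -> 'rV[rat]_n) y :
  bform G y (\sum_i F i) = \sum_i bform G y (F i).
Proof. exact: (big_morph (fun x => bform G y x) (fun a b => bformDr G a b y) (bform0r G y)). Qed.
Lemma bformC n (G : 'M[int]_n) x y : G^T = G -> bform G x y = bform G y x.
Proof.
move=> hG; rewrite /bform -[in LHS](trmxK (x *m _ *m _)) mxE !trmx_mul trmxK mulmxA.
by rewrite /gramQ map_trmx hG.
Qed.

Lemma dual0 n (G : 'M[int]_n) : in_dual G 0.
Proof. by move=> y _; rewrite bform0l; exact: intq0. Qed.
Lemma dualD n (G : 'M[int]_n) x y : in_dual G x -> in_dual G y -> in_dual G (x + y).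
Proof. by move=> hx hy z hz; rewrite bformDl; apply: intqD; [apply: hx|apply: hy]. Qed.
Lemma dualN n (G : 'M[int]_n) x : in_dual G x -> in_dual G (- x).
Proof. by move=> hx z hz; rewrite bformNl; apply: intqN; apply: hx. Qed.
Lemma dualMn n (G : 'M[int]_n) x m : in_dual G x -> in_dual G (x *+ m).
Proof. by move=> hx; elim: m => [|m IH]; rewrite ?mulr0n ?mulrS; [exact: dual0|exact: dualD]. Qed.
Lemma dual_sum n (G : 'M[int]_n) (I : finType) (F : I -> 'rV[rat]_n) :
  (forall i, in_dual G (F i)) -> in_dual G (\sum_i F i).
Proof. by move=> H; apply: big_ind => //; [exact: dual0|exact: dualD]. Qed.

Definition fadd_on n (G : 'M[int]_n) (f : 'rV[rat]_n -> 'rV['F_5]_4) :=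
  forall x y, in_dual G x -> in_dual G y -> f (x + y) = f x + f y.
Lemma f0 n G (f : 'rV[rat]_n -> 'rV['F_5]_4) : fadd_on G f -> f 0 = 0.
Proof. by move=> h; apply: (addrI (f 0)); rewrite addr0 -h ?addr0 //; exact: dual0. Qed.
Lemma fN n G (f : 'rV[rat]_n -> 'rV['F_5]_4) x : fadd_on G f -> in_dual G x -> f (- x) = - f x.
Proof.
move=> h hx; apply/eqP; rewrite -addr_eq0 -h ?addNr ?(f0 h) //; exact: dualN.
Qed.
Lemma fMn n G (f : 'rV[rat]_n -> 'rV['F_5]_4) x m : fadd_on G f -> in_dual G x -> f (x *+ m) = f x *+ m.
Proof.
move=> h hx; elim: m => [|m IH]; first by rewrite !mulr0n (f0 h).
by rewrite !mulrS h ?IH //; exact: dualMn.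
Qed.
Lemma f_sum n G (f : 'rV[rat]_n -> 'rV['F_5]_4) (I : finType) (F : I -> 'rV[rat]_n) :
  fadd_on G f -> (forall i, in_dual G (F i)) -> f (\sum_i F i) = \sum_i f (F i).
Proof.
move=> h hF.
suff : (fun x a => in_dual G x /\ f x = a) (\sum_i F i) (\sum_i f (F i)) by case.
apply: (big_ind2 (fun x a => in_dual G x /\ f x = a)); first by split; [exact: dual0|exact: f0 h].
  by move=> x1 a1 x2 a2 [h1 <-] [h2 <-]; split; [exact: dualD|exact: h].
by move=> i _; split; [apply: hF|].
Qed.

Lemma F5_5 : (5%:R : 'F_5) = 0. Proof. by rewrite -(Fp_nat_mod (isT : prime 5)). Qed.
Lemma F5_val (a : 'F_5) : (val a)%:R = a.
Proof. by apply: val_inj; rewrite /= val_Fp_nat // modn_small. Qed.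
Lemma vF5_5 (v : 'rV['F_5]_4) : v *+ 5 = 0.
Proof. by apply/rowP => k; rewrite mulmxnE mxE -mulr_natr F5_5 mulr0. Qed.
Lemma vF5_2 (v : 'rV['F_5]_4) : v *+ 2 = 0 -> v = 0.
Proof.
move=> h; have : v *+ (2 * 3) = v by rewrite mulrSr vF5_5 add0r.
by rewrite mulrnA h mul0rn => <-.
Qed.

Definition toF (q : rat) : 'F_5 := (numq q)%:~R.
Lemma intq_eq q : is_intq q -> q = (numq q)%:~R.
Proof. by move=> [z ->]; rewrite numq_int. Qed.
Lemma toF_int z : toF z%:~R = z%:~R. Proof. by rewrite /toF numq_int. Qed.
Lemma toFD a b : is_intq a -> is_intq b -> toF (a + b) = toF a + toF b.
Proof. by move=> [x ->] [y ->]; rewrite -rmorphD !toF_int rmorphD. Qed.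
Lemma toFM a b : is_intq a -> is_intq b -> toF (a * b) = toF a * toF b.
Proof. by move=> [x ->] [y ->]; rewrite -rmorphM !toF_int rmorphM. Qed.
Lemma toF_nat m : toF m%:R = m%:R. Proof. by rewrite !pmulrn toF_int. Qed.
Lemma toF5 a : is_intq a -> toF (5 * a) = 0.
Proof. by move=> ha; rewrite toFM ?toF_nat ?F5_5 ?mul0r //; exact: intq_nat. Qed.
Lemma toF_sum (I : finType) (F : I -> rat) :
  (forall i, is_intq (F i)) -> toF (\sum_i F i) = \sum_i toF (F i).
Proof.
move=> hF.
suff : (fun x a => is_intq x /\ toF x = a) (\sum_i F i) (\sum_i toF (F i)) by case.
apply: (big_ind2 (fun x a => is_intq x /\ toF x = a)); first by split; [exact: intq0| rewrite -(mulr0n 1) toF_nat].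
  by move=> x1 a1 x2 a2 [h1 <-] [h2 <-]; split; [exact: intqD|exact: toFD].
by move=> i _; split; [apply: hF|].
Qed.
Lemma toF0_div a : is_intq a -> toF a = 0 -> is_intq (a / 5).
Proof.
move=> ha h0; rewrite (intq_eq ha); move: h0; rewrite /toF.
have hc : 5 \in [pchar 'F_5] := pchar_Fp (isT : prime 5).
move/eqP; rewrite -(dvdz_pcharf hc) => /dvdzP [m ->].
by exists m; rewrite rmorphM /= mulfK.
Qed.

Lemma mulmxMn_l m n p (A : 'M[rat]_(m, n)) (B : 'M[rat]_(n, p)) k : (A *+ k) *m B = (A *m B) *+ k.
Proof. by elim: k => [|k IH]; rewrite ?mulr0n ?mul0mx // !mulrS mulmxDl IH. Qed.

Lemma pigeon (w : 'I_16 -> 'rV['F_5]_4) (S : {set 'rV['F_5]_4}) :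
  (#|S| <= 25)%N -> (forall i, w i \in S) -> (forall v, v \in S -> - v \in S) ->
  exists i j, i != j /\ (w i = w j \/ w i = - w j).
Proof.
move=> hS hw hN.
case: (boolP [exists i, exists j, (i != j) && ((w i == w j) || (w i == - w j))]).
  move=> /existsP [i /existsP [j /andP [ne /orP [/eqP e|/eqP e]]]]; exists i, j; split=> //; first [by left | by right].
move=> H0; exfalso.
have H : forall i j, i != j -> w i = w j \/ w i = - w j -> False.
  move=> i j ne [e|e]; move/negP: H0; apply; apply/existsP; exists i; apply/existsP; exists j;
  by rewrite ne e eqxx ?orbT.
have inj1 : injective w.
  move=> i j e; case: (eqVneq i j) => // ne; exfalso; exact: (H i j ne (or_introl e)).
have inj2 : injective (fun i => - w i) by move=> i j /oppr_inj /inj1.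
pose A := [set w i | i in 'I_16]; pose A' := [set - w i | i in 'I_16].
have cA : #|A| = 16 by rewrite card_imset // card_ord.
have cA' : #|A'| = 16 by rewrite card_imset // card_ord.
have sub : A :|: A' \subset S.
  apply/subsetP => v; rewrite inE => /orP [/imsetP [i _ ->]|/imsetP [i _ ->]]; first exact: hw.
  exact/hN/hw.
have cI : (#|A :&: A'| <= 1)%N.
  apply: (@leq_trans #|[set (0 : 'rV['F_5]_4)]|); last by rewrite cards1.
  apply: subset_leq_card; apply/subsetP => v.
  move/setIP => [/imsetP [i _ ->] /imsetP [j _ e]].
  have ij : i = j.
    case: (eqVneq i j) => // ne; exfalso; exact: (H i j ne (or_intror e)).
  move: e; rewrite -ij => /eqP; rewrite -addr_eq0 -mulr2n => /eqP /vF5_2 ->.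
  by rewrite inE.
have := subset_leq_card sub; have := cardsUI A A'; rewrite cA cA'.
move=> h1 h2; have h3 := leq_trans h2 hS; clear -h1 h3 cI; lia.
Qed.

Lemma intvec_delta n (i : 'I_n) : intvec (delta_mx 0 i : 'rV[rat]_n).
Proof. by move=> k; rewrite mxE; exact: intq_nat. Qed.
Lemma sum_delta n (i : 'I_n) : \sum_k (delta_mx 0 i : 'rV[rat]_n) 0 k = 1.
Proof.
rewrite (bigD1 i) //= big1 ?addr0; first by rewrite mxE !eqxx.
by move=> k /negPf nk; rewrite mxE nk andbF.
Qed.
Lemma dot_delta n (i j : 'I_n) :
  ((delta_mx 0 i : 'rV[rat]_n) *m (delta_mx 0 j : 'rV[rat]_n)^T) 0 0 = (i == j)%:R.
Proof. by rewrite trmx_delta mul_delta_mx_cond mulmxnE mxE !eqxx /=. Qed.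

Notation ee i := (delta_mx 0 i : 'rV[rat]_16).
Lemma inD_pp (i j : 'I_16) : in_D (ee i + ee j).
Proof.
split; first by apply: intvecD; apply: intvec_delta.
by exists 1; rewrite sum_rowD !sum_delta mulr1.
Qed.
Lemma inD_pm (i j : 'I_16) : in_D (ee i - ee j).
Proof.
split; first by apply: intvecD; [|apply: intvecN]; apply: intvec_delta.
by exists 0; rewrite sum_rowD sum_rowN !sum_delta subrr mulr0.
Qed.
Lemma inD_2 (i : 'I_16) : in_D (ee i *+ 2).
Proof. by rewrite mulr2n; exact: inD_pp. Qed.

Lemma dot_lin (x y : 'rV[rat]_16) :
  ((x + y) *m (x + y)^T) 0 0 = (x *m x^T) 0 0 + (y *m y^T) 0 0 + (x *m y^T) 0 0 + (y *m x^T) 0 0.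
Proof. rewrite linearD /= mulmxDl !mulmxDr !mxE; lra. Qed.

Lemma dot_lin2 (x y : 'rV[rat]_16) :
  ((x - y) *m (x - y)^T) 0 0 = (x *m x^T) 0 0 + (y *m y^T) 0 0 - (x *m y^T) 0 0 - (y *m x^T) 0 0.
Proof. rewrite linearD linearN /= mulmxDl !mulmxDr !mulmxN !mulNmx opprK !mxE; lra. Qed.

Lemma norm_pp (i j : 'I_16) : i != j ->
  ((ee i + ee j) *m (ee i + ee j)^T) 0 0 = 2 :> rat.
Proof.
move=> ne; rewrite dot_lin // !dot_delta !eqxx (negPf ne) eq_sym (negPf ne) /=.
by rewrite !addr0.
Qed.
Lemma norm_pm (i j : 'I_16) : i != j ->
  ((ee i - ee j) *m (ee i - ee j)^T) 0 0 = 2 :> rat.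
Proof.
move=> ne; rewrite dot_lin2 !dot_delta !eqxx (negPf ne) eq_sym (negPf ne) /=.
by rewrite !subr0.
Qed.

Lemma entry_row (m n p : nat) (A : 'M['F_5]_(m, n)) (B : 'M['F_5]_(p, n)) i j :
  (A *m B^T) i j = (row i A *m (row j B)^T) 0 0.
Proof. by rewrite !mxE; apply: eq_bigr => k _; rewrite !mxE. Qed.

Lemma trE (v : 'rV['F_5]_4) l : v^T l 0 = v 0 l. Proof. by rewrite mxE. Qed.

Lemma quad_exp (x y : 'rV['F_5]_4) (M : 'M['F_5]_4) :
  (x *m M *m y^T) 0 0 = \sum_k \sum_l x 0 k * M k l * y 0 l.
Proof.
rewrite mxE exchange_big /=; apply: eq_bigr => l _.
by rewrite mxE mulr_suml trE.
Qed.

Lemma intqMn x m : is_intq x -> is_intq (x *+ m).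
Proof. by move=> hx; rewrite -mulr_natr; apply: intqM => //; exact: intq_nat. Qed.

Theorem lemma4p2 (G : 'M[int]_16) :
  pos_def_integral_gram G ->
  rootless G ->
  disc_group_iso G ('rV['F_5]_4) ->
  ~ iso_to_sublattice_HS16 G.
Proof.
move=> [Gsym Gpos] Hroot [f [fadd fsurj fker]] [B [HB BB]].
have fa : fadd_on G f := fadd.
have Bu : B \in unitmx.
  rewrite unitmxE unitfE; apply/negP => /det0P [v v0 vB].
  by have := Gpos v v0; rewrite (bform_B _ _ BB) vB mul0mx mxE ltxx.
pose Bi := invmx B.
have cB x : x *m Bi *m B = x by rewrite -mulmxA mulVmx // mulmx1.
have bfc x y : bform G (x *m Bi) (y *m Bi) = (x *m y^T) 0 0 by rewrite (bform_B _ _ BB) !cB.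
have dualc x : in_D x -> in_dual G (x *m Bi).
  move=> hx y hy; rewrite (bform_B _ _ BB) cB; apply: dot_D_HS => //; exact: inHS_comb.
have noroot x : in_D x -> (x *m x^T) 0 0 = 2 -> f ((x *+ 2) *m Bi) <> 0.
  move=> hx hn; rewrite mulmxMn_l (fMn _ fa (dualc x hx)) => /vF5_2 h0.
  apply: Hroot; exists (x *m Bi); split; last by rewrite bfc.
  by apply/(fker _ (dualc x hx)).
pose w i := f (ee i *+ 2 *m Bi).
have dw i : in_dual G (ee i *+ 2 *m Bi) := dualc _ (inD_2 i).
have Hpp i j : i != j -> w i + w j <> 0.
  move=> ne; have := noroot _ (inD_pp i j) (norm_pp ne).
  by rewrite mulrnDl mulmxDl fa.
have Hpm i j : i != j -> w i - w j <> 0.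
  move=> ne; have := noroot _ (inD_pm i j) (norm_pm ne).
  rewrite mulrnBl mulmxBl fa; [|exact: dw|exact: dualN (dw j)].
  by rewrite (fN fa (dw j)).
have exd : forall k : 'I_4, exists x : 'rV[rat]_16, in_dual G x /\ f x = delta_mx 0 k.
  move=> k; have [x hx fx] := fsurj (delta_mx 0 k); by exists x.
have [d hd] := fin_all_exists exd.
have dd k : in_dual G (d k) by case: (hd k).
have fd k : f (d k) = delta_mx 0 k by case: (hd k).
pose liftv (a : 'rV['F_5]_4) := \sum_k d k *+ val (a 0 k).
have dliftv a : in_dual G (liftv a) by apply: dual_sum => k; apply: dualMn.
have fliftv a : f (liftv a) = a.
  rewrite /liftv (f_sum fa) => [|k]; last by apply: dualMn.
  rewrite [RHS]row_sum_delta; apply: eq_bigr => k _.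
  by rewrite (fMn _ fa (dd k)) fd -scaler_nat F5_val.
have remI c : in_dual G c -> intvec (c - liftv (f c)).
  move=> hc; apply/(fker _ (dualD hc (dualN (dliftv _)))).
  by rewrite fa ?(fN fa (dliftv _)) ?fliftv ?subrr //; exact: dualN.
pose Nq k l := 5 * bform G (d k) (d l).
have Nint k l : is_intq (Nq k l).
  have h5 : intvec (d k *+ 5).
    by apply/(fker _ (dualMn 5 (dd k))); rewrite (fMn _ fa (dd k)) fd vF5_5.
  by have := dd l _ h5; rewrite bformC // bformMnl /Nq mulr_natl.
pose M := \matrix_(k, l) toF (Nq k l).
have ME k l : M k l = toF (Nq k l) by rewrite mxE.
clearbody M.
have i5 x : is_intq x -> is_intq (5 * x) by move=> hx; apply: intqM => //; exact: intq_nat.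
have key c c' : in_dual G c -> in_dual G c' ->
   is_intq (5 * bform G c c') /\ toF (5 * bform G c c') = (f c *m M *m (f c')^T) 0 0.
  move=> hc hc'.
  set L := liftv (f c); set L' := liftv (f c').
  have E : bform G c c' = bform G (c - L) c' + bform G L (c' - L') + bform G L L'.
    by rewrite -addrA -bformDr subrK -bformDl subrK.
  have i1 : is_intq (bform G (c - L) c') by rewrite bformC //; apply: hc'; exact: remI.
  have i2 : is_intq (bform G L (c' - L')) by apply: dliftv; exact: remI.
  have E2 : 5 * bform G L L' = \sum_k \sum_l Nq k l *+ val (f c 0 k) *+ val (f c' 0 l).
    rewrite /L /L' /liftv bform_suml mulr_sumr; apply: eq_bigr => k _.
    rewrite bform_sumr mulr_sumr; apply: eq_bigr => l _.
    by rewrite bformMnl bformMnr mulrnAC -!mulrnAr.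
  have intT k l : is_intq (Nq k l *+ val (f c 0 k) *+ val (f c' 0 l)).
    by apply: intqMn; apply: intqMn.
  have i3 : is_intq (5 * bform G L L').
    by rewrite E2; apply: intq_sum => k; apply: intq_sum => l.
  rewrite E !mulrDr.
  split; first by apply: intqD => //; apply: intqD; apply: i5.
  rewrite (toFD (intqD (i5 _ i1) (i5 _ i2)) i3) (toFD (i5 _ i1) (i5 _ i2)) (toF5 i1) (toF5 i2) !add0r.
  rewrite E2 toF_sum => [|k]; last by apply: intq_sum => l.
  rewrite quad_exp.
  apply: eq_bigr => k _.
  rewrite toF_sum => [|l]; last exact: intT.
  apply: eq_bigr => l _.
  rewrite -(mulr_natr (Nq k l *+ _)) -(mulr_natr (Nq k l)) (toFM (intqM (Nint k l) (intq_nat _)) (intq_nat _)).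
  rewrite (toFM (Nint k l) (intq_nat _)) !toF_nat !F5_val ME.
  by rewrite (mulrC (toF _)).
have Gu : gramQ G \in unitmx by rewrite -BB unitmx_mul unitmx_tr Bu.
have gE k (y : 'rV[rat]_16) : bform G (delta_mx 0 k *m invmx (gramQ G)) y = y 0 k.
  by rewrite /bform mulmxKV // -rowE !mxE.
have gdual k : in_dual G (delta_mx 0 k *m invmx (gramQ G)).
  by move=> y hy; rewrite gE; apply: hy.
have Mfree : row_free M.
  rewrite -kermx_eq0; apply/eqP/row_matrixP => i; rewrite row0.
  set x := row i (kermx M).
  have hx : x *m M = 0 by rewrite /x -row_mul mulmx_ker row0.
  pose c := liftv x.
  have hc : in_dual G c := dliftv x.
  have hcl l : is_intq (bform G c (d l)).
    have [j5 t5] := key c (d l) hc (dd l).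
    rewrite fliftv hx mul0mx mxE in t5.
    by have := toF0_div j5 t5; rewrite mulrC mulKf.
  have hcd y : in_dual G y -> is_intq (bform G c y).
    move=> hy; rewrite -(subrK (liftv (f y)) y) bformDr; apply: intqD.
      exact: hc _ (remI y hy).
    rewrite bform_sumr; apply: intq_sum => l; rewrite bformMnr; apply: intqMn; exact: hcl.
  have ci : intvec c by move=> k; rewrite -(gE k c) bformC //; apply: hcd; exact: gdual.
  by have := (fker _ hc).2 ci; rewrite fliftv.
pose W := \matrix_(i < 16) w i.
have rowW i : row i W = w i by rewrite rowK.
clearbody W.
have WMW : W *m M *m W^T = 0.
  apply/matrixP => i j; rewrite [RHS]mxE entry_row row_mul !rowW /w.
  have [_ <-] := key _ _ (dw i) (dw j).
  by rewrite bfc toF5 //; apply: dot_D_HS; [exact: inD_2 | left; exact: inD_2].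
have rW : (\rank W <= 2)%N.
  have := mxrank_mul_min (W *m M) W^T; rewrite WMW mxrank0 mxrankMfree // mxrank_tr.
  lia.
have cS : (#|rowg W| <= 25)%N.
  rewrite card_rowg card_Fp //; apply: (@leq_trans (5 ^ 2)) => //; exact: leq_pexp2l.
have wS i : w i \in rowg W by rewrite mem_rowg -rowW row_sub.
have nS v : v \in rowg W -> - v \in rowg W by rewrite !mem_rowg eqmx_opp.
have [i [j [ne [e|e]]]] := pigeon cS wS nS.
  by apply: (Hpm i j ne); rewrite e subrr.
by apply: (Hpp i j ne); rewrite e addNr.
Qed.
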